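(* Let $n\ge2$, $q\in\mathbb C$ a primitive $n$-th root of unity, and $u_q(sl_2)$ the $\mathbb C$-algebra with generators $K,E,F$ and relations $K^n=1$, $E^n=F^n=0$, $EK=qKE$, $FK=q^{-1}KF$, $EF-FE=\frac{K-K^{-1}}{q-q^{-1}}$, with basis $\{K^iF^jE^k:0\le i,j,k\le n-1\}$. Let $\int$ be the linear functional with $\int KF^{n-1}E^{n-1}=1$ and zero on all other basis monomials, giving the standard Frobenius form $(a,b)=\int ab$. For an invertible $u\in u_q(sl_2)$ consider the twisted Frobenius form $(a,b)_u:=\int uab$, with inverse $g_u=\sum g_u^1\otimes g_u^2$ and $\ell_u:=\sum g_u^1g_u^2$. Then $\ell_u$ depends only on the component of $u^{-1}$ in $u_q(sl_2)_0$: if $u,v$ are invertible and $u^{-1}$ and $v^{-1}$ have the same component in $u_q(sl_2)_0$, then $\ell_u=\ell_v$.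
   Context: For a Frobenius form $(\ ,\ )$ (bilinear, $(ab,c)=(a,bc)$, nondegenerate), its inverse is $g=\sum g^1\otimes g^2$ with $\sum(a,g^1)g^2=a=\sum g^1(g^2,a)$ for all $a$. The $\mathbb Z/n\mathbb Z$-grading of $u_q(sl_2)$ gives the basis monomial $K^iF^jE^k$ degree $j-k$ mod $n$; $u_q(sl_2)_0$ is the degree-$0$ part, i.e. the span of the monomials $K^iF^jE^j$, and the component of an element in $u_q(sl_2)_0$ is its projection onto this span along the other graded parts. *)

(* Defs.v *)
From mathcomp Require Import all_boot all_algebra.
From mathcomp Require Import reals Rstruct.
From mathcomp.real_closed Require Export complex.
Set Implicit Arguments. Unset Strict Implicit. Unset Printing Implicit Defensive.
Import GRing.Theory.
Local Open Scope ring_scope.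

Notation CC := (Rdefinitions.R[i]).

Section Uq.
Variables (n : nat) (A : unitAlgType CC) (K E F : A).

Definition mono (i j k : nat) : A := K ^+ i * F ^+ j * E ^+ k.

Definition monot (t : 'I_n * 'I_n * 'I_n) : A := mono t.1.1 t.1.2 t.2.

Definition uq_relations (q : CC) : Prop :=
  [/\ K ^+ n = 1, E ^+ n = 0, F ^+ n = 0,
      E * K = q *: (K * E) &
      F * K = q^-1 *: (K * F) /\
      E * F - F * E = (q - q^-1)^-1 *: (K - K^-1)].

Definition uq_basis : Prop :=
  forall a : A, exists! c : {ffun 'I_n * 'I_n * 'I_n -> CC},
    a = \sum_(t : 'I_n * 'I_n * 'I_n) c t *: monot t.

Definition standard_integral (intg : A -> CC) : Prop :=
  (forall (c : CC) (x y : A), intg (c *: x + y) = c * intg x + intg y) /\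
  (forall i j k : nat, (i < n)%N -> (j < n)%N -> (k < n)%N ->
     intg (mono i j k) = ((i == 1%N) && (j == n.-1) && (k == n.-1))%:R).

Definition tform (intg : A -> CC) (u : A) (a b : A) : CC := intg (u * a * b).

(* g = sum_{p in g} p.1 (x) p.2 is the inverse of the bilinear form *)
Definition is_inverse_form (form : A -> A -> CC) (g : seq (A * A)) : Prop :=
  forall a : A,
    \sum_(p <- g) form a p.1 *: p.2 = a /\ \sum_(p <- g) form p.2 a *: p.1 = a.

Definition ell (g : seq (A * A)) : A := \sum_(p <- g) p.1 * p.2.

Definition deg0_part (c : {ffun 'I_n * 'I_n * 'I_n -> CC}) : A :=
  \sum_(t : 'I_n * 'I_n * 'I_n | t.1.2 == t.2) c t *: monot t.

Definition same_deg0_component (a b : A) : Prop :=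
  exists ca cb : {ffun 'I_n * 'I_n * 'I_n -> CC},
    [/\ a = \sum_(t : 'I_n * 'I_n * 'I_n) ca t *: monot t,
        b = \sum_(t : 'I_n * 'I_n * 'I_n) cb t *: monot t
      & deg0_part ca = deg0_part cb].

End Uq.

(* Main.v *)
Require Import Defs.
From mathcomp Require Import all_boot all_algebra.
From mathcomp Require Import reals Rstruct.
Import GRing.Theory.
Local Open Scope ring_scope.
Set Implicit Arguments. Unset Strict Implicit.

Section Helpers.
Variables (A : unitAlgType CC) (intg : A -> CC).

Definition Psi (S : seq (A * A)) (y : A) : A := \sum_(p <- S) p.1 * y * p.2.

Lemma sum_swap (S S' : seq (A * A)) (x x' : A)
  (hS1 : forall a, \sum_(p <- S') intg (p.2 * a) *: p.1 = a)
  (hS2 : forall a, \sum_(p <- S) intg (a * p.1) *: p.2 = a)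
  (hx : forall z, intg (z * x) = intg (x' * z)) (y : A) :
  \sum_(p <- S) p.1 * x * y * p.2 = \sum_(p <- S') p.1 * y * x' * p.2.
Proof.
transitivity (\sum_(p <- S) \sum_(p' <- S') intg (p'.2 * (p.1 * x)) *: (p'.1 * y * p.2)).
  apply: eq_bigr => p _; rewrite -{1}(hS1 (p.1 * x)) mulr_suml mulr_suml.
  by apply: eq_bigr => p' _; rewrite -!scalerAl.
rewrite exchange_big /=; apply: eq_bigr => p' _.
rewrite -[_ * x' * _]mulrA -(hS2 (x' * p'.2)) mulr_sumr.
apply: eq_bigr => p _; rewrite -scalerAr; congr (_ *: _).
by rewrite mulrA hx mulrA.
Qed.

Lemma Psi_sum (S : seq (A * A)) (I : finType) (P : pred I) (c : I -> CC) (m : I -> A) :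
  Psi S (\sum_(t | P t) c t *: m t) = \sum_(t | P t) c t *: Psi S (m t).
Proof.
rewrite /Psi.
transitivity (\sum_(p <- S) \sum_(t | P t) c t *: (p.1 * m t * p.2)).
  apply: eq_bigr => p _; rewrite mulr_sumr mulr_suml; apply: eq_bigr => t _.
  by rewrite -scalerAr -scalerAl.
rewrite exchange_big; apply: eq_bigr => t _; by rewrite scaler_sumr.
Qed.

Lemma pow_comm (K X : A) (c : CC) (h : X * K = c *: (K * X)) (k : nat) :
  X ^+ k * K = c ^+ k *: (K * X ^+ k).
Proof.
elim: k => [|k IH]; first by rewrite !expr0 mul1r mulr1 scale1r.
rewrite exprSr -mulrA h -scalerAr (mulrA (X ^+ k)) IH -scalerAl scalerA -mulrA -exprSr.
by rewrite -exprS.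
Qed.

Lemma Su_props (u : A) (hu : u \is a GRing.unit) (g : seq (A * A))
  (hg : is_inverse_form (tform intg u) g) :
  [/\ (forall a, \sum_(p <- [seq (p.1, u * p.2) | p <- g]) intg (p.2 * a) *: p.1 = a),
      (forall a, \sum_(p <- [seq (p.1, u * p.2) | p <- g]) intg (a * p.1) *: p.2 = a)
    & ell g = Psi [seq (p.1, u * p.2) | p <- g] u^-1].
Proof.
split.
- move=> a; rewrite big_map /=; have [_ h] := hg a; rewrite -{2}h; apply: eq_bigr => p _; by rewrite /tform.
- move=> a; rewrite big_map /=.
  have [h _] := hg (u^-1 * a).
  rewrite -{2}(mulVKr hu a) -h mulr_sumr; apply: eq_bigr => p _.
  by rewrite /tform -scalerAr (mulrA u) mulrV // mul1r.
- rewrite /Psi /ell big_map; apply: eq_bigr => p _ /=.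
  by rewrite -(mulrA _ u^-1) (mulKr hu).
Qed.

End Helpers.
Unset Implicit Arguments.

Theorem mainTheorem7 (n : nat) (hn : (2 <= n)%N) (q : CC)
  (hq : n.-primitive_root q)
  (A : unitAlgType CC) (K E F : A)
  (hrel : uq_relations n K E F q) (hbasis : uq_basis n K E F)
  (intg : A -> CC) (hint : standard_integral n K E F intg)
  (u v : A) (hu : u \is a GRing.unit) (hv : v \is a GRing.unit)
  (h0 : same_deg0_component n K E F u^-1 v^-1)
  (gu gv : seq (A * A))
  (hgu : is_inverse_form (tform intg u) gu)
  (hgv : is_inverse_form (tform intg v) gv) :
  ell gu = ell gv.
Proof.
case: hrel => hKn hEn hFn hEK [hFK hEF].
case: hint => hlin hmono.
have hqn := prim_expr_order hq.
have hq0 : q != 0.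
  apply/eqP => q0; move: hqn; rewrite q0 expr0n.
  have -> : (n == 0%N) = false by case: (n) hn.
  by move/eqP; rewrite eq_sym oner_eq0.
have int0 : intg 0 = 0.
  have := hlin 1 0 0; rewrite scale1r addr0 mul1r => h.
  by apply: (addrI (intg 0)); rewrite addr0 -h.
have intZ c x : intg (c *: x) = c * intg x.
  by have := hlin c x 0; rewrite !addr0 int0 addr0.
have intD x y : intg (x + y) = intg x + intg y.
  by have := hlin 1 x y; rewrite scale1r mul1r.
have int_sum (I : finType) (P : pred I) (c : I -> CC) (m : I -> A) :
    intg (\sum_(t | P t) c t *: m t) = \sum_(t | P t) c t * intg (m t).
  apply: (big_ind2 (fun a b => intg a = b)) => //.
  by move=> a b c' d <- <-; rewrite intD.
have hKpow (m0 : nat) : K ^+ m0 = K ^+ (m0 %% n).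
  by rewrite {1}(divn_eq m0 n) exprD mulnC exprM hKn expr1n mul1r.
have hmK i j k : mono K E F i j k * K = (q ^+ k * q^-1 ^+ j) *: (K * mono K E F i j k).
  rewrite /mono -mulrA (pow_comm hEK) -scalerAr.
  rewrite [K ^+ i * F ^+ j * (K * _)]mulrA -[K ^+ i * F ^+ j * K]mulrA (pow_comm hFK).
  rewrite -!scalerAr -!scalerAl scalerA mulrC; congr (_ *: _).
  by rewrite !mulrA -exprSr -exprS.
have hlam j k : (j < n)%N -> (k < n)%N -> j != k -> q ^+ k * q^-1 ^+ j != 1.
  move=> hj hk hjk; apply/negP => /eqP h1.
  have : q ^+ k == q ^+ j.
    by rewrite -[q ^+ j]mulr1 -h1 mulrCA -exprMn mulfV // expr1n mulr1.
  by rewrite (eq_prim_root_expr hq) !modn_small // eq_sym (negbTE hjk).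
have hKm i j k : K * mono K E F i j k = mono K E F ((i.+1) %% n) j k.
  by rewrite /mono !mulrA -exprS -hKpow.
have intK z : intg (z * K) = intg (K * z).
  have [c [-> _]] := hbasis z.
  rewrite mulr_suml mulr_sumr.
  under eq_bigr do rewrite -scalerAl.
  under [in RHS]eq_bigr do rewrite -scalerAr.
  rewrite !int_sum; apply: eq_bigr => t _; congr (_ * _).
  rewrite /monot hmK intZ hKm.
  case: (eqVneq (t.1.2 : nat) t.2) => [-> | hjk].
    by rewrite -exprMn mulfV // expr1n mul1r.
  rewrite hmono ?ltn_mod ?ltn_ord ?(leq_trans _ hn) //.
  set b := (_ && _); have -> : b = false.
    apply/negP => /andP[/andP[_ /eqP ha] /eqP hb].
    by move: hjk; rewrite ha hb eqxx.
  by rewrite mulr0.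
have [Su1 Su2 ->] := Su_props hu hgu.
have [Sv1 Sv2 ->] := Su_props hv hgv.
set Su := [seq (p.1, u * p.2) | p <- gu] in Su1 Su2 *.
set Sv := [seq (p.1, v * p.2) | p <- gv] in Sv1 Sv2 *.
have PsiSV y : Psi Sv y = Psi Su y.
  have h := sum_swap (x:=1) (x':=1) Su1 Sv2 (fun z => etrans (f_equal intg (mulr1 z)) (f_equal intg (esym (mul1r z)))) y.
  move: h; under eq_bigr do rewrite mulr1; under [X in _ = X -> _]eq_bigr do rewrite mulr1.
  done.
have PsiK y : Psi Su (K * y) = Psi Su (y * K).
  rewrite /Psi; under eq_bigr do rewrite mulrA; under [in RHS]eq_bigr do rewrite mulrA.
  exact: (sum_swap (x:=K) (x':=K) Su1 Su2 intK y).
have PsiZ c y : Psi Su (c *: y) = c *: Psi Su y.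
  rewrite /Psi scaler_sumr; apply: eq_bigr => p _.
  by rewrite -scalerAr -scalerAl.
have Psi0 i j k : (i < n)%N -> (j < n)%N -> (k < n)%N -> j != k ->
    Psi Su (mono K E F i j k) = 0.
  move=> hi hj hk hjk.
  have -> : mono K E F i j k = K * mono K E F (i + n.-1) j k.
    rewrite hKm; congr mono.
    by rewrite -addnS prednK ?(leq_trans _ hn) // modnDr modn_small.
  set y := mono K E F _ j k.
  have := PsiK y; rewrite hmK PsiZ => /eqP.
  rewrite -subr_eq0 -{1}(scale1r (Psi Su (K * y))) -scalerBl scaler_eq0 subr_eq0.
  by rewrite eq_sym (negbTE (hlam _ _ hj hk hjk)) /= => /eqP.
have key (c : {ffun 'I_n * 'I_n * 'I_n -> CC}) :
    Psi Su (\sum_t c t *: monot K E F t) = Psi Su (deg0_part K E F c).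
  rewrite /deg0_part !Psi_sum (bigID (fun t : 'I_n * 'I_n * 'I_n => t.1.2 == t.2)) /=.
  rewrite [X in _ + X]big1 ?addr0 // => t htt.
  by rewrite /monot Psi0 ?ltn_ord // scaler0.
case: h0 => ca [cb [-> -> hd]].
by rewrite PsiSV !key hd.
Qed.
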